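(* Let $(E\to M,\rho,\langle\cdot,\cdot\rangle,[\cdot,\cdot])$ be a Courant algebroid, $\mathcal{G}$ a generalized metric and $\operatorname{div}$ a divergence operator on $E$, and let $D$ be a metric generalized connection with divergence $\operatorname{div}$ and pure-type torsion, with total generalized Ricci curvature $\mathrm{Ric}$. Then $\mathrm{Ric}$ is symmetric if and only if the pair $(\mathcal{G},\operatorname{div})$ is compatible, i.e. \[\operatorname{div}([a_\mp,b_\pm])-\mathcal{L}_{\rho a_\mp}(\operatorname{div}b_\pm)+\mathcal{L}_{\rho b_\pm}(\operatorname{div}a_\mp)=0\quad\text{for all }a_\mp\in\Gamma(V_\mp),\ b_\pm\in\Gamma(V_\pm).\]
   Context: A Courant algebroid $(E\to M,\rho,\langle\cdot,\cdot\rangle,[\cdot,\cdot])$: vector bundle $E$ with nondegenerate symmetric form, anchor $\rho:E\to TM$ and bracket on $\Gamma(E)$ with $[a,[b,c]]=[[a,b],c]+[b,[a,c]]$, $\mathcal{L}_{\rho a}\langle b,c\rangle=\langle[a,b],c\rangle+\langle b,[a,c]\rangle$, $2[a,a]=\rho^*d\langle a,a\rangle$. A generalized connection is a linear $D:\Gamma(E)\to\Gamma(E^*\otimes E)$ with $D(fa)=fDa+\rho^*df\otimes a$ and $\rho^*d\langle a,b\rangle=\langle Da,b\rangle+\langle a,Db\rangle$; $D_ba:=(Da)(b)$, $(Da)^*$ is the adjoint of $b\mapsto D_ba$. Naive curvature $\mathcal{R}_0(a,b)c:=D_aD_bc-D_bD_ac-D_{[a,b]}c$. A generalized metric is a self-adjoint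 $\mathcal{G}\in\operatorname{End}E$ with $\mathcal{G}^2=1$; $V_\pm=\ker(\mathcal{G}\mp1)$, $x_\pm:=\tfrac12(1\pm\mathcal{G})x$. $D$ is metric if it preserves $\Gamma(V_\pm)$. A divergence operator is linear $\operatorname{div}:\Gamma(E)\to C^\infty(M)$ with $\operatorname{div}(fa)=f\operatorname{div}a+\mathcal{L}_{\rho a}f$; $D$ has divergence $\operatorname{div}$ if $\operatorname{div}a=\operatorname{tr}(Da)$. Torsion $T(a,b):=D_ab-D_ba-[a,b]+(Da)^*b\in\Gamma(\wedge^3E^* )$ is of pure type if $T\in\Gamma(\wedge^3V_+\oplus\wedge^3V_-)$. Total curvature $\mathcal{R}(a,b):=\mathcal{R}_0(a_+,b_-)+\mathcal{R}_0(a_-,b_+)$; total generalized Ricci curvature $\mathrm{Ric}(a,b):=\operatorname{tr}(c\mapsto\mathcal{R}(c,a)b)$, a section of $E^*\otimes E^*$. *)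

(* Defs.v *)
(* Algebraic (Courant–Dorfman style) rendering of a Courant
   algebroid: C plays the role of C^oo(M) (a commutative R-algebra, R the reals),
   X plays the role of Gamma(E) (a C-module), vector fields are R-linear
   derivations of C, and the finite rank of E is recorded by a finite frame. *)
From HB Require Import structures.
From mathcomp Require Import all_boot all_order all_algebra.
From mathcomp Require Import reals.
Set Implicit Arguments. Unset Strict Implicit. Unset Printing Implicit Defensive.
Import Order.TTheory GRing.Theory Num.Theory.
Local Open Scope ring_scope.

Section CourantDefs.
Variables (R : realType) (C : comAlgType R) (X : lmodType C).

Definition is_vector_field (v : C -> C) : Prop :=
  [/\ forall x y : C, v (x + y) = v x + v y,
      forall (r : R) (x : C), v (r *: x) = r *: v x &
      forall x y : C, v (x * y) = x * v y + v x * y].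

(* the finite-rank hypothesis: a finite "frame" (e_i, f_i) with
   x = sum_i <f_i, x> e_i for every section x (E is a finite-rank bundle,
   hence Gamma(E) is finitely generated projective; the coordinate
   functionals are represented through the pairing). *)
Definition is_frame (ip : X -> X -> C) (n : nat) (e f : 'I_n -> X) : Prop :=
  forall x : X, x = \sum_(i < n) ip (f i) x *: e i.

Definition frame_trace (ip : X -> X -> C) (n : nat) (e f : 'I_n -> X)
  (A : X -> X) : C := \sum_(i < n) ip (f i) (A (e i)).

(* Courant algebroid (E -> M, rho, <.,.>, [.,.]).  rho a is the vector field
   rho(a) acting on functions; rho^* d g is encoded through the pairing:
   <rho^* d g, c> = rho c g. *)
Definition courant_algebroid (ip : X -> X -> C) (rho : X -> C -> C)
  (br : X -> X -> X) (n : nat) (e f : 'I_n -> X) : Prop :=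
  (forall a b, ip a b = ip b a) /\
  (forall (k : C) a b c, ip (k *: a + b) c = k * ip a c + ip b c) /\
  is_frame ip e f /\
  (forall a, is_vector_field (rho a)) /\
  (forall (k : C) a b g, rho (k *: a + b) g = k * rho a g + rho b g) /\
  (forall (r : R) a b c, br ((r%:A : C) *: a + b) c
                         = (r%:A : C) *: br a c + br b c) /\
  (forall (r : R) a b c, br c ((r%:A : C) *: a + b)
                         = (r%:A : C) *: br c a + br c b) /\
  (forall a b c, br a (br b c) = br (br a b) c + br b (br a c)) /\
  (forall a b c, rho a (ip b c) = ip (br a b) c + ip b (br a c)) /\
  (forall a c, (ip (br a a) c) *+ 2 = rho c (ip a a)).

Definition generalized_metric (ip : X -> X -> C) (G : X -> X) : Prop :=
  [/\ (forall (k : C) a b, G (k *: a + b) = k *: G a + G b),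
      (forall a b, ip (G a) b = ip a (G b)) &
      (forall a, G (G a) = a)].

Definition pplus (G : X -> X) (x : X) : X := ((2^-1 : R)%:A : C) *: (x + G x).
Definition pminus (G : X -> X) (x : X) : X := ((2^-1 : R)%:A : C) *: (x - G x).

Definition divergence_op (rho : X -> C -> C) (div : X -> C) : Prop :=
  (forall a b, div (a + b) = div a + div b) /\
  (forall (k : C) a, div (k *: a) = k * div a + rho a k).

(* generalized connection; D b a stands for D_b a = (Da)(b) *)
Definition gen_connection (ip : X -> X -> C) (rho : X -> C -> C)
  (D : X -> X -> X) : Prop :=
  [/\ (forall (k : C) b b' a, D (k *: b + b') a = k *: D b a + D b' a),
      (forall b a a', D b (a + a') = D b a + D b a'),
      (forall b (k : C) a, D b (k *: a) = k *: D b a + rho b k *: a) &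
      (forall c a b, rho c (ip a b) = ip (D c a) b + ip a (D c b))].

Definition metric_connection (G : X -> X) (D : X -> X -> X) : Prop :=
  forall a b, (G a = a -> G (D b a) = D b a) /\ (G a = - a -> G (D b a) = - D b a).

Definition has_divergence (ip : X -> X -> C) (n : nat) (e f : 'I_n -> X)
  (D : X -> X -> X) (div : X -> C) : Prop :=
  forall a, div a = frame_trace ip e f (fun b => D b a).

(* torsion as a 3-form: T(a,b,c) = < D_a b - D_b a - [a,b] + (Da)^* b, c >,
   with <(Da)^* b, c> = <b, D_c a> *)
Definition torsion3 (ip : X -> X -> C) (br : X -> X -> X) (D : X -> X -> X)
  (a b c : X) : C :=
  ip (D a b - D b a - br a b) c + ip b (D c a).

(* T lies in wedge^3 V_+ (+) wedge^3 V_- *)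
Definition pure_type_torsion (ip : X -> X -> C) (br : X -> X -> X)
  (G : X -> X) (D : X -> X -> X) : Prop :=
  forall a b c, torsion3 ip br D a b c
    = torsion3 ip br D (pplus G a) (pplus G b) (pplus G c)
      + torsion3 ip br D (pminus G a) (pminus G b) (pminus G c).

Definition naive_curv (br : X -> X -> X) (D : X -> X -> X) (a b c : X) : X :=
  D a (D b c) - D b (D a c) - D (br a b) c.

Definition total_curv (br : X -> X -> X) (G : X -> X) (D : X -> X -> X)
  (a b c : X) : X :=
  naive_curv br D (pplus G a) (pminus G b) c
  + naive_curv br D (pminus G a) (pplus G b) c.

Definition total_ricci (ip : X -> X -> C) (br : X -> X -> X) (n : nat)
  (e f : 'I_n -> X) (G : X -> X) (D : X -> X -> X) (a b : X) : C :=
  frame_trace ip e f (fun c => total_curv br G D c a b).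

Definition compatible_pair (rho : X -> C -> C) (br : X -> X -> X)
  (G : X -> X) (div : X -> C) : Prop :=
  forall a b, ((G a = - a /\ G b = b) \/ (G a = a /\ G b = - b)) ->
    div (br a b) - rho a (div b) + rho b (div a) = 0.

End CourantDefs.

(* Main.v *)
Require Import Defs.
From HB Require Import structures.
From mathcomp Require Import all_boot all_order all_algebra.
From mathcomp Require Import reals ring.
Import Order.TTheory GRing.Theory Num.Theory.
Local Open Scope ring_scope.

Lemma self_add0 (V : zmodType) (x : V) : x = x + x -> x = 0.
Proof. by move/(congr1 (fun y => y - x)); rewrite subrr addrK => ->. Qed.

Section S.
Variables (R : realType) (C : comAlgType R) (X : lmodType C).
Variables (ip : X -> X -> C) (rho : X -> C -> C) (br : X -> X -> X)
  (n : nat) (e f : 'I_n -> X) (div : X -> C) (D : X -> X -> X).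
Hypothesis Hca : courant_algebroid ip rho br e f.
Hypothesis Hdv : divergence_op rho div.
Hypothesis Hgc : gen_connection ip rho D.
Hypothesis Hhd : has_divergence ip e f D div.

Lemma ipC a b : ip a b = ip b a. Proof. by case: Hca. Qed.
Lemma ipL k a b c : ip (k *: a + b) c = k * ip a c + ip b c.
Proof. by case: Hca => _ []. Qed.
Lemma frameE x : x = \sum_(i < n) ip (f i) x *: e i.
Proof. by case: Hca => _ [_ [H _]]; apply: H. Qed.
Lemma rhoV a : is_vector_field (rho a).
Proof. by case: Hca => _ [_ [_ [H _]]]. Qed.
Lemma brL (r : R) a b c : br ((r%:A : C) *: a + b) c = (r%:A : C) *: br a c + br b c.
Proof. by case: Hca => _ [_ [_ [_ [_ [H _]]]]]. Qed.
Lemma brR (r : R) a b c : br c ((r%:A : C) *: a + b) = (r%:A : C) *: br c a + br c b.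
Proof. by case: Hca => _ [_ [_ [_ [_ [_ [H _]]]]]]. Qed.

Lemma ipD a b c : ip (a + b) c = ip a c + ip b c.
Proof. by have := ipL 1 a b c; rewrite scale1r mul1r. Qed.
Lemma ip0 c : ip 0 c = 0.
Proof. by apply: self_add0; rewrite -ipD addr0. Qed.
Lemma ipZ k a c : ip (k *: a) c = k * ip a c.
Proof. by have := ipL k a 0 c; rewrite addr0 ip0 addr0. Qed.
Lemma ipN a c : ip (- a) c = - ip a c.
Proof. by rewrite -scaleN1r ipZ mulN1r. Qed.
Lemma ipDr a b c : ip c (a + b) = ip c a + ip c b.
Proof. by rewrite ipC ipD ![ip _ c]ipC. Qed.
Lemma ip0r c : ip c 0 = 0.
Proof. by rewrite ipC ip0. Qed.
Lemma ipZr k a c : ip c (k *: a) = k * ip c a.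
Proof. by rewrite ipC ipZ ipC. Qed.
Lemma ipNr a c : ip c (- a) = - ip c a.
Proof. by rewrite ipC ipN ipC. Qed.
Lemma ipBr a b c : ip c (a - b) = ip c a - ip c b.
Proof. by rewrite ipDr ipNr. Qed.
Lemma ip_sumr c (F : 'I_n -> X) : ip c (\sum_i F i) = \sum_i ip c (F i).
Proof. exact: (big_morph (ip c) (fun a b => ipDr a b c) (ip0r c)). Qed.
Lemma ip_sum c (F : 'I_n -> X) : ip (\sum_i F i) c = \sum_i ip (F i) c.
Proof. exact: (big_morph (ip^~ c) (fun a b => ipD a b c) (ip0 c)). Qed.

Lemma nondeg z : (forall c, ip z c = 0) -> z = 0.
Proof.
move=> H; rewrite (frameE z) big1 // => i _.
by rewrite ipC H scale0r.
Qed.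

Lemma brDl a b c : br (a + b) c = br a c + br b c.
Proof. by have := brL 1 a b c; rewrite !scale1r => ->. Qed.
Lemma brDr a b c : br c (a + b) = br c a + br c b.
Proof. by have := brR 1 a b c; rewrite !scale1r => ->. Qed.
Lemma br0r c : br c 0 = 0.
Proof. by apply: self_add0; rewrite -brDr addr0. Qed.
Lemma br0l c : br 0 c = 0.
Proof. by apply: self_add0; rewrite -brDl addr0. Qed.

Lemma rhoD a x y : rho a (x + y) = rho a x + rho a y.
Proof. by case: (rhoV a). Qed.
Lemma rho0 a : rho a 0 = 0.
Proof. by apply: self_add0; rewrite -rhoD addr0. Qed.
Lemma rhoN a x : rho a (- x) = - rho a x.
Proof. by apply/eqP; rewrite -addr_eq0 -rhoD addNr rho0. Qed.
Lemma rhoM a x y : rho a (x * y) = x * rho a y + rho a x * y.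
Proof. by case: (rhoV a). Qed.
Lemma rho1 a : rho a 1 = 0.
Proof. by apply: self_add0; rewrite -{1}[1]mulr1 rhoM mul1r mulr1. Qed.
Lemma rhoA a (r : R) : rho a (r%:A) = 0.
Proof. by case: (rhoV a) => _ H _; rewrite H rho1 scaler0. Qed.
Lemma rho_sum a (F : 'I_n -> C) : rho a (\sum_i F i) = \sum_i rho a (F i).
Proof. exact: (big_morph (rho a) (rhoD a) (rho0 a)). Qed.

Lemma DlL k b b' a : D (k *: b + b') a = k *: D b a + D b' a.
Proof. by case: Hgc. Qed.
Lemma DrD b a a' : D b (a + a') = D b a + D b a'.
Proof. by case: Hgc. Qed.
Lemma DrZ b k a : D b (k *: a) = k *: D b a + rho b k *: a.
Proof. by case: Hgc. Qed.
Lemma Dmet c a b : rho c (ip a b) = ip (D c a) b + ip a (D c b).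
Proof. by case: Hgc. Qed.
Lemma DlD b b' a : D (b + b') a = D b a + D b' a.
Proof. by have := DlL 1 b b' a; rewrite !scale1r. Qed.
Lemma Dl0 a : D 0 a = 0.
Proof. by apply: self_add0; rewrite -DlD addr0. Qed.
Lemma DlZ k b a : D (k *: b) a = k *: D b a.
Proof. by have := DlL k b 0 a; rewrite !addr0 Dl0 addr0. Qed.
Lemma DlN b a : D (- b) a = - D b a.
Proof. by apply/eqP; rewrite -addr_eq0 -DlD addNr Dl0. Qed.
Lemma DlB b b' a : D (b - b') a = D b a - D b' a.
Proof. by rewrite DlD DlN. Qed.
Lemma Dr0 b : D b 0 = 0.
Proof. by apply: self_add0; rewrite -DrD addr0. Qed.
Lemma DrN b a : D b (- a) = - D b a.
Proof. by apply/eqP; rewrite -addr_eq0 -DrD addNr Dr0. Qed.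
Lemma DrB b a a' : D b (a - a') = D b a - D b a'.
Proof. by rewrite DrD DrN. Qed.
Lemma Dr_sum b (F : 'I_n -> X) : D b (\sum_i F i) = \sum_i D b (F i).
Proof. exact: (big_morph (D b) (DrD b) (Dr0 b)). Qed.

Lemma divD a b : div (a + b) = div a + div b. Proof. by case: Hdv. Qed.
Lemma div0 : div 0 = 0. Proof. by apply: self_add0; rewrite -divD addr0. Qed.
Lemma divN a : div (- a) = - div a.
Proof. by apply/eqP; rewrite -addr_eq0 -divD addNr div0. Qed.

Definition hf : C := ((2^-1 : R)%:A : C).
Lemma hfhf : hf + hf = 1.
Proof.
have E : (2^-1 + 2^-1 : R) = 1 by rewrite [RHS](splitr 1) mul1r.
by rewrite /hf -scalerDl E scale1r.
Qed.
Lemma hfK (x : X) : hf *: (x + x) = x.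
Proof. by rewrite scalerDr -scalerDl hfhf scale1r. Qed.
Lemma hfKC (x : C) : x + x = 0 -> x = 0.
Proof. by move=> H; rewrite -[x]mul1r -hfhf mulrDl -mulrDr H mulr0. Qed.

Definition clin (A : X -> X) := forall (k : C) x y, A (k *: x + y) = k *: A x + A y.
Lemma clinD A : clin A -> forall x y, A (x + y) = A x + A y.
Proof. by move=> H x y; have := H 1 x y; rewrite !scale1r. Qed.
Lemma clin0 A : clin A -> A 0 = 0.
Proof. by move=> H; apply: self_add0; rewrite -clinD // addr0. Qed.
Lemma clinZ A : clin A -> forall k x, A (k *: x) = k *: A x.
Proof. by move=> H k x; rewrite -[k *: x]addr0 H clin0 // addr0. Qed.
Lemma clinN A : clin A -> forall x, A (- x) = - A x.
Proof. by move=> H x; rewrite -scaleN1r clinZ // scaleN1r. Qed.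
Lemma clinB A : clin A -> forall x y, A (x - y) = A x - A y.
Proof. by move=> H x y; rewrite clinD // clinN. Qed.
Lemma clin_frame A : clin A -> forall x, A x = \sum_(i < n) ip (f i) x *: A (e i).
Proof.
move=> H x; rewrite {1}(frameE x).
rewrite (big_morph A (@clinD A H) (@clin0 A H)).
by apply: eq_bigr => i _; rewrite clinZ.
Qed.

Notation tr := (frame_trace ip e f).
Lemma tr_ext A B : (forall c, A c = B c) -> tr A = tr B.
Proof. by move=> H; apply: eq_bigr => i _; rewrite H. Qed.
Lemma trD A B : tr (fun c => A c + B c) = tr A + tr B.
Proof. by rewrite /frame_trace -big_split; apply: eq_bigr => i _; rewrite ipDr. Qed.
Lemma trN A : tr (fun c => - A c) = - tr A.
Proof. by rewrite /frame_trace -sumrN; apply: eq_bigr => i _; rewrite ipNr. Qed.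
Lemma trB A B : tr (fun c => A c - B c) = tr A - tr B.
Proof. by rewrite trD trN. Qed.
Lemma tr0 : tr (fun _ => 0) = 0.
Proof. by rewrite /frame_trace big1 // => i _; rewrite ip0r. Qed.

Lemma tr_expand A B : clin A ->
  tr (fun c => A (B c)) = \sum_(i < n) \sum_(j < n) ip (f j) (B (e i)) * ip (f i) (A (e j)).
Proof.
move=> HA; apply: eq_bigr => i _.
by rewrite (@clin_frame A HA) ip_sumr; apply: eq_bigr => j _; rewrite ipZr.
Qed.

Lemma trC A B : clin A -> clin B -> tr (fun c => A (B c)) = tr (fun c => B (A c)).
Proof.
move=> HA HB; rewrite !tr_expand // exchange_big /=.
by apply: eq_bigr => i _; apply: eq_bigr => j _; rewrite mulrC.
Qed.

Lemma zm1 (V : zmodType) (a b c d g : V) : a - (b + g) - (c - (d + g)) = a - b - (c - d).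
Proof. by rewrite opprD addrA opprB [d + g]addrC -[a - b - g + _]addrA -[g + d - c]addrA addKr opprB. Qed.
Lemma zm2 (V : zmodType) (a1 a2 b1 b2 c1 c2 : V) :
  (a1 + a2) - (b1 + b2) - (c1 + c2) = (a1 - b1 - c1) + (a2 - b2 - c2).
Proof. by rewrite opprD addrACA opprD [LHS]addrACA. Qed.

Lemma star a x : \sum_(i < n) ip (D a (f i)) x *: e i + \sum_(i < n) ip (f i) x *: D a (e i) = 0.
Proof.
have E : D a x = D a (\sum_(i < n) ip (f i) x *: e i) by rewrite -frameE.
rewrite Dr_sum in E.
have E2 : \sum_(i < n) D a (ip (f i) x *: e i) = \sum_(i < n) ip (f i) x *: D a (e i)
   + (\sum_(i < n) ip (D a (f i)) x *: e i + \sum_(i < n) ip (f i) (D a x) *: e i).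
  by rewrite -!big_split; apply: eq_bigr => i _ /=; rewrite DrZ Dmet scalerDl.
rewrite E2 -frameE in E.
move/(congr1 (fun y => y - D a x)) : E.
by rewrite subrr addrA addrK addrC => <-.
Qed.

Lemma tr_der a T : clin T ->
  tr (fun c => D a (T c)) = rho a (tr T) + tr (fun c => T (D a c)).
Proof.
move=> HT.
have K : \sum_(i < n) ip (D a (f i)) (T (e i)) + tr (fun c => T (D a c)) = 0.
  have Z : \sum_(j < n) ip (f j) (\sum_(i < n) ip (D a (f i)) (T (e j)) *: e i
              + \sum_(i < n) ip (f i) (T (e j)) *: D a (e i)) = 0.
    by rewrite big1 // => j _; rewrite star ip0r.
  rewrite -[RHS]Z.
  under [RHS]eq_bigr => j _ do rewrite ipDr !ip_sumr.
  rewrite big_split /=; congr (_ + _).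
    under eq_bigr => i _ do rewrite (@clin_frame T HT (e i)) ip_sumr.
    rewrite exchange_big /=; apply: eq_bigr => j _; apply: eq_bigr => i _.
    by rewrite !ipZr mulrC.
  rewrite tr_expand // exchange_big /=; apply: eq_bigr => j _; apply: eq_bigr => i _.
  by rewrite ipZr mulrC.
move: K; rewrite /frame_trace rho_sum.
move=> K.
have -> : \sum_(i < n) rho a (ip (f i) (T (e i))) = \sum_(i < n) ip (D a (f i)) (T (e i))
   + \sum_(i < n) ip (f i) (D a (T (e i))).
  by rewrite -big_split; apply: eq_bigr => i _; rewrite Dmet.
rewrite -[LHS]add0r -{1}K; ring.
Qed.


Definition GOK (G : X -> X) := generalized_metric ip G /\ metric_connection G D
  /\ pure_type_torsion ip br G D.

Lemma Dl0' : forall a, D 0 a = 0. Proof. exact: Dl0. Qed.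

Lemma naive0 x z : naive_curv br D x 0 z = 0.
Proof. by rewrite /naive_curv !Dl0 !Dr0 br0r !Dl0 !subr0. Qed.

Lemma naiveD x x' a z : naive_curv br D (x + x') a z
  = naive_curv br D x a z + naive_curv br D x' a z.
Proof. by rewrite /naive_curv !DlD DrD brDl DlD zm2. Qed.

Lemma naiveDr x a z z' : naive_curv br D x a (z + z')
  = naive_curv br D x a z + naive_curv br D x a z'.
Proof. by rewrite /naive_curv !DrD zm2. Qed.

Lemma tors0a a c : torsion3 ip br D a 0 c = 0.
Proof. by rewrite /torsion3 Dr0 Dl0 br0r !subr0 ip0 ip0 addr0. Qed.
Lemma tors0b b c : torsion3 ip br D 0 b c = 0.
Proof. by rewrite /torsion3 Dl0 Dr0 br0l Dr0 !subr0 ip0 ip0r addr0. Qed.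

Section WithG.
Variable G : X -> X.
Hypothesis HG : GOK G.

Lemma GL k a b : G (k *: a + b) = k *: G a + G b. Proof. by case: HG => [[]]. Qed.
Lemma Gsa a b : ip (G a) b = ip a (G b). Proof. by case: HG => [[]]. Qed.
Lemma GG a : G (G a) = a. Proof. by case: HG => [[]]. Qed.
Lemma HMc : metric_connection G D. Proof. by case: HG => _ []. Qed.
Lemma HTt : pure_type_torsion ip br G D. Proof. by case: HG => _ []. Qed.
Lemma Glin : clin G. Proof. exact: GL. Qed.
Lemma GD a b : G (a + b) = G a + G b. Proof. exact: clinD Glin a b. Qed.
Lemma GN a : G (- a) = - G a. Proof. exact: clinN Glin a. Qed.
Lemma GB a b : G (a - b) = G a - G b. Proof. exact: clinB Glin a b. Qed.
Lemma GZ k a : G (k *: a) = k *: G a. Proof. exact: clinZ Glin k a. Qed.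

Local Notation Pp := (pplus G).
Local Notation Pm := (pminus G).

Lemma PpV x : G (Pp x) = Pp x.
Proof. by rewrite /pplus GZ GD GG addrC. Qed.
Lemma PmV x : G (Pm x) = - Pm x.
Proof. by rewrite /pminus GZ GB GG -scalerN opprB. Qed.
Lemma PpPm x : Pp x + Pm x = x.
Proof. by rewrite /pplus /pminus -scalerDr addrACA subrr addr0 hfK. Qed.
Lemma Pp_fix {y} : G y = y -> Pp y = y.
Proof. by move=> H; rewrite /pplus H hfK. Qed.
Lemma Pm_p {y} : G y = y -> Pm y = 0.
Proof. by move=> H; rewrite /pminus H subrr scaler0. Qed.
Lemma Pp_m {y} : G y = - y -> Pp y = 0.
Proof. by move=> H; rewrite /pplus H subrr scaler0. Qed.
Lemma Pm_fix {y} : G y = - y -> Pm y = y.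
Proof. by move=> H; rewrite /pminus H opprK hfK. Qed.
Lemma PmE x : Pm x = x - Pp x.
Proof. by rewrite -{2}(PpPm x) [Pp x + _]addrC addrK. Qed.
Lemma Pp_lin : clin Pp.
Proof.
move=> k x y; rewrite /pplus GL !scalerDr !scalerA [k * _]mulrC.
by rewrite [LHS]addrACA.
Qed.
Lemma Pm_lin : clin Pm.
Proof. by move=> k x y; rewrite !PmE Pp_lin scalerBr opprD addrACA. Qed.
Lemma PmPm x : Pm (Pm x) = Pm x. Proof. exact: Pm_fix (PmV x). Qed.
Lemma PpPp x : Pp (Pp x) = Pp x. Proof. exact: Pp_fix (PpV x). Qed.
Lemma PmPp x : Pm (Pp x) = 0. Proof. exact: Pm_p (PpV x). Qed.
Lemma PpPm0 x : Pp (Pm x) = 0. Proof. exact: Pp_m (PmV x). Qed.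
Lemma GE x : G x = Pp x - Pm x.
Proof. by rewrite -{1}(PpPm x) GD PpV PmV. Qed.

Lemma orth {u v} : G u = u -> G v = - v -> ip u v = 0.
Proof.
move=> Hu Hv; apply: hfKC.
have E : ip u v = - ip u v by rewrite -{1}Hu Gsa Hv ipNr.
by rewrite {1}E addNr.
Qed.

Lemma DVp {a} : G a = a -> forall b, G (D b a) = D b a.
Proof. by move=> H b; case: (HMc a b) => H1 _; apply: H1. Qed.
Lemma DVm {a} : G a = - a -> forall b, G (D b a) = - D b a.
Proof. by move=> H b; case: (HMc a b) => _ H1; apply: H1. Qed.

Lemma DG a c : D a (G c) = G (D a c).
Proof.
rewrite (GE c) DrB -[in RHS](PpPm c) DrD GD (DVp (PpV c)) (DVm (PmV c)).
by [].
Qed.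
Lemma DPp a c : D a (Pp c) = Pp (D a c).
Proof. by rewrite /pplus DrZ rhoA scale0r addr0 DrD DG. Qed.

Lemma tors_mixed {u v} : (G u = u /\ G v = - v) \/ (G u = - u /\ G v = v) ->
  br u v = D u v - D v u.
Proof.
move=> H.
have T0 : forall x, torsion3 ip br D u v x = 0.
  move=> x; rewrite HTt; case: H => [[Hu Hv]|[Hu Hv]].
    by rewrite (Pp_m Hv) (Pm_p Hu) tors0a tors0b addr0.
  by rewrite (Pp_m Hu) (Pm_p Hv) tors0b tors0a addr0.
have O : forall x, ip v (D x u) = 0.
  case: H => [[Hu Hv]|[Hu Hv]] x.
    by rewrite ipC; apply: orth (DVp Hu x) Hv.
  by apply: orth Hv (DVm Hu x).
have : D u v - D v u - br u v = 0.
  by apply: nondeg => x; have := T0 x; rewrite /torsion3 O addr0.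
by move/eqP; rewrite subr_eq0 => /eqP ->.
Qed.

Lemma tr_Z M : clin M -> (forall c, G (M c) = M c) -> (forall c, M c = M (Pm c)) ->
  tr M = 0.
Proof.
move=> HMl HV HF.
rewrite (@tr_ext M (fun c => Pp (M (Pm c)))); last by move=> c; rewrite Pp_fix // -HF.
have HL : clin (fun c => M (Pm c)) by move=> k x y /=; rewrite Pm_lin HMl.
rewrite (@trC Pp (fun c => M (Pm c))) //; last exact: Pp_lin.
rewrite (@tr_ext _ (fun _ => 0)) ?tr0 // => c.
by rewrite PmPp clin0.
Qed.

Lemma div_p {y} : G y = y -> div y = tr (fun c => D (Pp c) y).
Proof.
move=> Hy; rewrite Hhd (@tr_ext _ (fun c => D (Pp c) y + D (Pm c) y)); last first.
  by move=> c; rewrite -DlD PpPm.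
rewrite trD (@tr_Z (fun c => D (Pm c) y)) ?addr0 //.
- by move=> k x z; rewrite Pm_lin DlL.
- by move=> c; rewrite (DVp Hy).
- by move=> c; rewrite PmPm.
Qed.

Lemma ric_formula a b : G a = - a -> G b = b ->
  total_ricci ip br e f G D a b
  = div (Pp (br a b)) - rho a (div b) - tr (fun c => D (D (Pp c) a) b).
Proof.
move=> Ha Hb.
have Eab : D a b = Pp (br a b).
  rewrite (tors_mixed (or_intror (conj Ha Hb))) (@clinB _ Pp_lin).
  by rewrite (Pp_fix (DVp Hb a)) (Pp_m (DVm Ha b)) subr0.
rewrite /total_ricci.
rewrite (@tr_ext _ (fun c => D (Pp c) (Pp (br a b)) - D a (D (Pp c) b)
    - (D (D (Pp c) a) b - D (Pp (D a c)) b))); last first.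
  move=> c; rewrite /total_curv (Pm_fix Ha) (Pp_m Ha) naive0 addr0 /naive_curv.
  by rewrite (tors_mixed (or_introl (conj (PpV c) Ha))) DPp DlB Eab.
rewrite !trB -(div_p (PpV _)).
have HT : clin (fun c => D (Pp c) b) by move=> k x y; rewrite Pp_lin DlL.
rewrite (@tr_der a _ HT) -(div_p Hb).
ring.
Qed.

Lemma naiveZ k x a z : G x = - x -> G a = a ->
  naive_curv br D (k *: x) a z = k *: naive_curv br D x a z.
Proof.
move=> Hx Ha.
have Hkx : G (k *: x) = - (k *: x) by rewrite GZ Hx scalerN.
rewrite /naive_curv (tors_mixed (or_intror (conj Hkx Ha)))
  (tors_mixed (or_intror (conj Hx Ha))).
rewrite !DlZ !DrZ !DlB DlD !DlZ !scalerBr.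
by rewrite zm1.
Qed.

Lemma ric_pp0 a b : G a = a -> G b = b -> total_ricci ip br e f G D a b = 0.
Proof.
move=> Ha Hb; rewrite /total_ricci.
rewrite (@tr_ext _ (fun c => naive_curv br D (Pm c) a b)); last first.
  by move=> c; rewrite /total_curv (Pm_p Ha) (Pp_fix Ha) naive0 add0r.
apply: tr_Z.
- by move=> k x y /=; rewrite Pm_lin naiveD (naiveZ k _ _ _ (PmV x) Ha).
- by move=> c; rewrite /naive_curv !GB (DVp (DVp Hb a)) (DVp (DVp Hb (Pm c))) (DVp Hb).
- by move=> c; rewrite PmPm.
Qed.

End WithG.

Lemma ppneg (G : X -> X) (x : X) : pplus (fun y => - G y) x = pminus G x.
Proof. by []. Qed.
Lemma pmneg (G : X -> X) (x : X) : pminus (fun y => - G y) x = pplus G x.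
Proof. by rewrite /pminus /pplus opprK. Qed.

Lemma GOK_neg G : GOK G -> GOK (fun x => - G x).
Proof.
move=> HG; split; [|split].
- split.
  + by move=> k a b; rewrite (GL _ HG) scalerN opprD.
  + by move=> a b; rewrite ipN ipNr (Gsa _ HG).
  + by move=> a; rewrite (GN _ HG) opprK (GG _ HG).
- move=> a b; split => H.
  + have Ga : G a = - a by rewrite -[in RHS]H /= opprK.
    by rewrite (DVm _ HG Ga) opprK.
  + have Ga : G a = a by apply: oppr_inj.
    by rewrite (DVp _ HG Ga).
- move=> a b c; rewrite (HTt _ HG) !ppneg !pmneg addrC.
  by [].
Qed.

Lemma ric_neg G a b :
  total_ricci ip br e f (fun x => - G x) D a b = total_ricci ip br e f G D a b.
Proof. by apply: tr_ext => c; rewrite /total_curv !ppneg !pmneg addrC. Qed.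

Lemma ric_mm0 G (HG : GOK G) a b : G a = - a -> G b = - b ->
  total_ricci ip br e f G D a b = 0.
Proof.
move=> Ha Hb; rewrite -ric_neg; apply: (ric_pp0 _ (GOK_neg _ HG)).
  by rewrite Ha opprK.
by rewrite Hb opprK.
Qed.

Lemma key G (HG : GOK G) a b : G a = - a -> G b = b ->
  total_ricci ip br e f G D a b - total_ricci ip br e f G D b a
  = div (br a b) - rho a (div b) + rho b (div a).
Proof.
move=> Ha Hb.
have Hb' : (fun x => - G x) b = - b by rewrite /= Hb.
have Ha' : (fun x => - G x) a = a by rewrite /= Ha opprK.
rewrite (ric_formula _ HG _ _ Ha Hb) -(ric_neg G b a) (ric_formula _ (GOK_neg _ HG) _ _ Hb' Ha').
rewrite ppneg.
have Eba : br b a = - br a b.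
  by rewrite (tors_mixed _ HG (or_introl (conj Hb Ha)))
     (tors_mixed _ HG (or_intror (conj Ha Hb))) opprB.
rewrite Eba (@clinN _ (Pm_lin _ HG)) divN.
have Ed : div (pplus G (br a b)) + div (pminus G (br a b)) = div (br a b).
  by rewrite -divD (PpPm G).
pose A := fun c => D (pplus G c) a.
pose B := fun c => D (pminus G c) b.
have HA : clin A by move=> k x y; rewrite /A (Pp_lin _ HG) DlL.
have HB : clin B by move=> k x y; rewrite /B (Pm_lin _ HG) DlL.
have QE : tr (fun c => D (D (pplus G c) a) b)
        = tr (fun c => D (D (pplus (fun y => - G y) c) b) a).
  transitivity (tr (fun c => B (A c))).
    by apply: tr_ext => c; rewrite /A /B (Pm_fix _ (DVm _ HG Ha _)).
  rewrite trC //; apply: tr_ext => c.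
  by rewrite /A /B (Pp_fix _ (DVp _ HG Hb _)).
rewrite -QE -Ed; ring.
Qed.

Lemma ric_split G (HG : GOK G) a b :
  total_ricci ip br e f G D a b
  = total_ricci ip br e f G D (pminus G a) (pplus G b)
  + total_ricci ip br e f G D (pplus G a) (pminus G b).
Proof.
have E1 : forall a b, total_ricci ip br e f G D a b
   = total_ricci ip br e f G D (pplus G a) b + total_ricci ip br e f G D (pminus G a) b.
  move=> x y; rewrite /total_ricci -trD; apply: tr_ext => c.
  rewrite /total_curv (PmPp _ HG) (PpPp _ HG) (PpPm0 _ HG) (PmPm _ HG) !naive0 addr0 add0r.
  by rewrite addrC.
have E2 : forall a b, total_ricci ip br e f G D a b
   = total_ricci ip br e f G D a (pplus G b) + total_ricci ip br e f G D a (pminus G b).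
  move=> x y; rewrite /total_ricci -trD; apply: tr_ext => c.
  by rewrite /total_curv -[in LHS](PpPm G y) !naiveDr addrACA.
rewrite E1 (E2 (pplus G a)) (E2 (pminus G a)).
rewrite (ric_pp0 _ HG _ _ (PpV _ HG a) (PpV _ HG b)).
rewrite (ric_mm0 _ HG _ _ (PmV _ HG a) (PmV _ HG b)).
by rewrite add0r addr0 addrC.
Qed.

Lemma main_sec G (HG : GOK G) :
  (forall a b, total_ricci ip br e f G D a b = total_ricci ip br e f G D b a)
   <-> compatible_pair rho br G div.
Proof.
split.
- move=> H a b [[Ha Hb]|[Ha Hb]].
    by rewrite -(key _ HG _ _ Ha Hb) H subrr.
  have K := key _ HG _ _ Hb Ha.
  have Eab : br a b = - br b a.
    by rewrite (tors_mixed _ HG (or_introl (conj Ha Hb)))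
       (tors_mixed _ HG (or_intror (conj Hb Ha))) opprB.
  have E : div (br b a) - rho b (div a) + rho a (div b) = 0 by rewrite -K H subrr.
  rewrite Eab divN.
  transitivity (- (div (br b a) - rho b (div a) + rho a (div b))); first ring.
  by rewrite E oppr0.
- move=> Hc a b.
  rewrite (ric_split _ HG a b) (ric_split _ HG b a).
  have E1 : total_ricci ip br e f G D (pminus G a) (pplus G b)
          = total_ricci ip br e f G D (pplus G b) (pminus G a).
    apply/eqP; rewrite -subr_eq0 (key _ HG _ _ (PmV _ HG a) (PpV _ HG b)).
    by apply/eqP; apply: Hc; left; split; [exact: PmV|exact: PpV].
  have E2 : total_ricci ip br e f G D (pminus G b) (pplus G a)
          = total_ricci ip br e f G D (pplus G a) (pminus G b).
    apply/eqP; rewrite -subr_eq0 (key _ HG _ _ (PmV _ HG b) (PpV _ HG a)).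
    by apply/eqP; apply: Hc; left; split; [exact: PmV|exact: PpV].
  by rewrite E1 E2 addrC.
Qed.

End S.

Theorem theorem4p6 (R : realType) (C : comAlgType R) (X : lmodType C)
  (ip : X -> X -> C) (rho : X -> C -> C) (br : X -> X -> X)
  (n : nat) (e f : 'I_n -> X)
  (G : X -> X) (div : X -> C) (D : X -> X -> X) :
  courant_algebroid ip rho br e f ->
  generalized_metric ip G ->
  divergence_op rho div ->
  gen_connection ip rho D ->
  metric_connection G D ->
  has_divergence ip e f D div ->
  pure_type_torsion ip br G D ->
  ((forall a b, total_ricci ip br e f G D a b = total_ricci ip br e f G D b a)
   <-> compatible_pair rho br G div).
Proof.
move=> Hca HGm Hdv Hgc Hmc Hhd Hpt.
eapply main_sec; try eassumption.
split; [exact: HGm | split; assumption].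
Qed.
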